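(* Let $w\in\mathcal W_n$ have $N$ blocks and suppose its block orbit $\langle w\rangle_\beta=\{\beta^k w:0\le k<N\}$ contains $N$ words. If $v$ is chosen uniformly at random from $\langle w\rangle_\beta$, then for all $i,k\in\{1,\dots,N\}$ the probability that the block of rank $i$ of $v$ is at position $k$ (i.e. $r_k(v)=i$) equals $\frac1N$.
   Context: Let $\mathcal A=\{a_1<a_2<\dots\}$ be a finite or countably infinite totally ordered alphabet. Lexicographic order: $u<v$ if $u$ is a proper prefix of $v$, or $u=ra_is$, $v=ra_jt$ with $i<j$. A word is primitive if it is not of the form $u^r$ with $r\ge 2$. $\mathcal W_n$ is the set of primitive words of length $n$ whose first letter is the smallest letter $a_w$ occurring in $w$ and whose last letter is different from $a_w$. Each $w\in\mathcal W_n$ decomposes uniquely as $w=B_1\cdots B_N$ into blocks: each block begins with a run of $a_w$ and ends just before the next run of $a_w$. For $j=1,\dots,N$ let $w^{(j)}=B_j\cdots B_NB_1\cdots B_{j-1}$; the rank $r_j(w)$ is the rank of $w^{(j)}$ among $w^{(1)},\dots,w^{(N)}$ in increasing lexicographic order (rank 1 = smallest). The block rotation is $\beta w=B_2\cdots B_NB_1$, and the block orbit of $w$ is $\langle w\rangle_\beta=\{w,\beta w,\dots,\beta^{N-1}w\}$. *)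

(* Defs.v *)
(* Alphabet A = {a_1 < a_2 < ...} is encoded by nat
   (letter a_i is the natural number i; a finite alphabet is a finite
   initial segment). Words are seq nat. *)
From mathcomp Require Import all_boot all_order all_algebra.
Set Implicit Arguments. Unset Strict Implicit. Unset Printing Implicit Defensive.

Fixpoint lexlt (u v : seq nat) : bool :=
  match u, v with
  | [::], [::] => false
  | [::], _ :: _ => true
  | _ :: _, [::] => false
  | x :: u', y :: v' => (x < y) || ((x == y) && lexlt u' v')
  end.

Definition primitive (w : seq nat) : Prop :=
  ~ exists (u : seq nat) (r : nat), 2 <= r /\ w = flatten (nseq r u).

Definition minletter (w : seq nat) : nat :=
  match w with [::] => 0 | x :: s => foldr minn x s end.

Definition inW (n : nat) (w : seq nat) : Prop :=
  size w = n /\ primitive w /\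
  exists x s, w = x :: s /\ x = minletter w /\ last x s != minletter w.

(* block decomposition with respect to the letter m: each block is a
   (maximal) run of m followed by the (maximal) run of letters <> m before
   the next run of m *)
Fixpoint blocks_aux (m : nat) (fuel : nat) (w : seq nat) : seq (seq nat) :=
  match fuel with
  | 0 => [::]
  | f.+1 =>
    match w with
    | [::] => [::]
    | _ :: _ =>
      let i := find (fun x => x != m) w in
      let r := drop i w in
      let j := find (fun x => x == m) r in
      (take i w ++ take j r) :: blocks_aux m f (drop j r)
    end
  end.

Definition blocks (w : seq nat) : seq (seq nat) :=
  blocks_aux (minletter w) (size w) w.

Definition nblocks (w : seq nat) : nat := size (blocks w).

(* w^(j) = B_j ... B_N B_1 ... B_{j-1}, for 1 <= j <= N *)
Definition brot (w : seq nat) (j : nat) : seq nat :=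
  flatten (rot j.-1 (blocks w)).

Definition rank (w : seq nat) (j : nat) : nat :=
  (count (fun l => lexlt (brot w l) (brot w j)) (iota 1 (nblocks w))).+1.

Definition beta (w : seq nat) : seq nat := flatten (rot 1 (blocks w)).

Definition border (w : seq nat) : seq (seq nat) :=
  undup [seq iter k beta w | k <- iota 0 (nblocks w)].

(* Main.v *)
Require Import Defs.
From mathcomp Require Import all_boot all_order all_algebra.
From mathcomp Require Import zify.
Set Implicit Arguments. Unset Strict Implicit. Unset Printing Implicit Defensive.


Lemma lexlt_irr u : lexlt u u = false.
Proof. by elim: u => //= x u ->; rewrite ltnn eqxx. Qed.

Lemma lexlt_trans u v w : lexlt u v -> lexlt v w -> lexlt u w.
Proof.
elim: u v w => [|x u IH] [|y v] [|z w] //=.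
case/orP=> [xy|/andP[/eqP-> uv]]; case/orP=> [yz|/andP[/eqP<- vw]].
- by rewrite (ltn_trans xy yz).
- by rewrite xy.
- by rewrite yz.
- by rewrite eqxx (IH _ _ uv vw) orbT.
Qed.

Lemma lexlt_total u v : u != v -> lexlt u v || lexlt v u.
Proof.
elim: u v => [|x u IH] [|y v] //= H.
case: (eqVneq x y) => [exy|xy].
  subst y; rewrite ltnn /=; apply: IH.
  by apply: contraNneq H => ->.
rewrite neq_ltn in xy; case/orP: xy => ->; by rewrite ?orbT.
Qed.

Lemma minletter_spec x s : minletter (x :: s) \in x :: s /\
  forall z, z \in x :: s -> minletter (x :: s) <= z.
Proof.
rewrite /=; elim: s => [|y s [IH1 IH2]] /=.
  by split; [rewrite mem_seq1|move=> z; rewrite mem_seq1 => /eqP->].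
set f := foldr minn x s in IH1 IH2 *.
split.
  have [->|->] : minn y f = y \/ minn y f = f by lia.
  - by rewrite !inE eqxx orbT.
  - move: IH1; rewrite !inE => /orP[->//|->]; by rewrite !orbT.
move=> z; rewrite !inE => /orP[zx|/orP[zy|zs]].
- have := IH2 z; rewrite inE zx => /(_ isT); lia.
- rewrite (eqP zy); lia.
- have := IH2 z; rewrite inE zs orbT => /(_ isT); lia.
Qed.

Lemma minletter_perm l l' : perm_eq l l' -> minletter l = minletter l'.
Proof.
case: l => [|x s]; case: l' => [|y s'] // P.
- by have := perm_size P.
- by have := perm_size P.
have [m1 l1] := minletter_spec x s.
have [m2 l2] := minletter_spec y s'.
apply/eqP; rewrite eqn_leq; apply/andP; split.
- apply: l1; by rewrite (perm_mem P).
- apply: l2; by rewrite -(perm_mem P).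
Qed.



Definition good (m : nat) (B : seq nat) :=
  exists a t, [/\ 0 < a, t != [::], m \notin t & B = nseq a m ++ t].

Lemma blocks_aux_cons m f x w : blocks_aux m f.+1 (x :: w) =
  let i := find (fun y => y != m) (x::w) in let r := drop i (x::w) in
  let j := find (fun y => y == m) r in
  (take i (x::w) ++ take j r) :: blocks_aux m f (drop j r).
Proof. by []. Qed.

Lemma find_flatten_good m bs : (forall B, B \in bs -> good m B) ->
  find (fun x => x == m) (flatten bs) = 0.
Proof.
case: bs => [|B' bs'] //= Hbs.
have [a' [t' [a0' _ _ ->]]] := Hbs B' (mem_head _ _).
by case: a' a0' => //= a' _; rewrite eqxx.
Qed.

Lemma parse_blocks m bs fuel : (forall B, B \in bs -> good m B) -> size bs <= fuel ->
  blocks_aux m fuel (flatten bs) = bs.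
Proof.
elim: bs fuel => [|B bs IH] [|f] //=.
move=> H hs.
have [a [t [a0 tn mt EB]]] := H B (mem_head _ _).
have Hbs : forall B, B \in bs -> good m B.
  by move=> B' HB'; apply: H; rewrite inE HB' orbT.
have Ew : B ++ flatten bs = m :: (nseq a.-1 m ++ t ++ flatten bs).
  by rewrite EB -catA; case: a a0 {EB}.
rewrite Ew -Ew.
have F1 : find (fun y => y != m) (B ++ flatten bs) = a.
  rewrite EB -catA find_cat has_nseq eqxx andbF size_nseq.
  case: t tn mt {EB Ew} => [|y t] //= _; rewrite inE negb_or => /andP[ym _].
  by rewrite eq_sym ym addn0.
have Hf := find_flatten_good Hbs.
have hasf : has (fun x => x == m) t = false.
  apply/hasPn => x xt; apply/negP => /eqP xm; by rewrite -xm xt in mt.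
rewrite F1 EB -catA drop_size_cat ?size_nseq // take_size_cat ?size_nseq //.
rewrite find_cat hasf Hf addn0 take_size_cat // drop_size_cat //.
by rewrite IH.
Qed.

Lemma decomp (m : nat) (w : seq nat) : forall a (t : seq nat), 0 < a -> m \notin t ->
  (if w is [::] then t != [::] else last m w != m) ->
  exists bs, (forall B, B \in bs -> good m B) /\ nseq a m ++ t ++ w = flatten bs.
Proof.
elim: w => [|y w IH] a t a0 mt C.
  exists [:: nseq a m ++ t]; split; last by rewrite /= !cats0.
  move=> B; rewrite mem_seq1 => /eqP->; by exists a, t.
case: (eqVneq y m) => [ym|ym].
  subst y.
  have Cw : is_true (if w is [::] then false else last m w != m).
    by case: w {IH} C => //=; rewrite eqxx.
  case: t mt {C} => [|z t] mt.
    have [bs [Hg E]] := IH a.+1 [::] isT mt Cw.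
    exists bs; split => //; rewrite -E /=; by elim: a {a0 E} => //= a ->.
  have [bs [Hg E]] := IH 1 [::] isT isT Cw.
  exists ((nseq a m ++ z :: t) :: bs); split.
    move=> B; rewrite inE => /orP[/eqP->|]; last exact: Hg.
    by exists a, (z :: t).
  by rewrite /= -E /= -!catA.
have mt' : m \notin rcons t y.
  by rewrite mem_rcons inE negb_or eq_sym ym.
have Cw' : is_true (if w is [::] then rcons t y != [::] else last m w != m).
  case: w {IH} C => //=; by rewrite -cats1; case: t {mt mt'}.
have [bs [Hg E]] := IH a (rcons t y) a0 mt' Cw'.
exists bs; split => //; by rewrite -E -cats1 -!catA.
Qed.



Lemma size_flatten_good m bs : (forall B, B \in bs -> good m B) ->
  size bs <= size (flatten bs).
Proof.
elim: bs => [|B bs IH] //= H.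
have [a [t [a0 _ _ EB]]] := H B (mem_head _ _).
rewrite size_cat EB size_cat size_nseq.
have : size bs <= size (flatten bs) by apply: IH => B' h; apply: H; rewrite inE h orbT.
move=> h; by rewrite -addnA -add1n leq_add // (leq_trans h) // leq_addl.
Qed.

Lemma blocks_inW n w : inW n w ->
  (forall B, B \in blocks w -> good (minletter w) B) /\ flatten (blocks w) = w.
Proof.
move=> [_ [_ [x [s [Ew [xm lm]]]]]].
have [bs [Hg E]] : exists bs, (forall B, B \in bs -> good (minletter w) B) /\
     nseq 1 (minletter w) ++ [::] ++ s = flatten bs.
  apply: decomp => //.
  case: s Ew lm => [|y s] Ew lm; first by rewrite /= xm eqxx in lm.
  by move: lm => /=.
have Ew' : w = flatten bs by rewrite -E /= -xm.
suff -> : blocks w = bs by rewrite -Ew'.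
rewrite /blocks; have -> : blocks_aux (minletter w) (size w) w =
  blocks_aux (minletter w) (size w) (flatten bs) by rewrite -Ew'.
apply: (parse_blocks Hg).
rewrite Ew'; exact: size_flatten_good Hg.
Qed.

Lemma minletter_perm' (l l' : seq nat) : perm_eq l l' -> minletter l = minletter l'.
Proof. exact: minletter_perm. Qed.

Lemma blocks_rot n w j : inW n w -> blocks (flatten (rot j (blocks w))) = rot j (blocks w).
Proof.
move=> HW; have [Hg Ef] := blocks_inW HW.
have P : perm_eq (flatten (rot j (blocks w))) w.
  by rewrite -{2}Ef; apply: perm_flatten; rewrite perm_rot.
rewrite /blocks (minletter_perm P) (perm_size P); apply: parse_blocks.
  by move=> B; rewrite mem_rot; apply: Hg.
rewrite size_rot -[X in _ <= size X]Ef; exact: size_flatten_good Hg.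
Qed.

Lemma count_lt (T : eqType) (s : seq T) (p q : pred T) :
  (forall u, p u -> q u) -> (exists z, z \in s /\ q z /\ ~~ p z) -> count p s < count q s.
Proof.
move=> pq; elim: s => [|x s IH] [z [zs [qz pz]]]; first by [].
rewrite /=; case: (eqVneq z x) => [ezx|nzx].
  subst z; rewrite (negbTE pz) qz /= add0n add1n ltnS.
  by apply: sub_count => u; apply: pq.
have := IH (ex_intro _ z (conj _ (conj qz pz))).
move: zs; rewrite inE (negbTE nzx) /= => zs /(_ zs).
case: (p x) (pq x) => [->//|]; case: (q x) => /= _; lia.
Qed.

Lemma perm_range (s : seq nat) N : uniq s -> size s = N ->
  (forall x, x \in s -> x < N) -> perm_eq s (iota 0 N).
Proof.
move=> us ss sl.
have H1 : {subset s <= iota 0 N} by move=> x /sl; rewrite mem_iota.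
have H2 : size (iota 0 N) <= size s by rewrite size_iota ss.
have [_ E] := uniq_min_size us H1 H2.
by apply: uniq_perm => //; apply: iota_uniq.
Qed.

Lemma rank_count (S : seq (seq nat)) i : uniq S -> 1 <= i <= size S ->
  count (fun x => (count (fun u => lexlt u x) S).+1 == i) S = 1.
Proof.
move=> uS hi.
set rk := fun x => count (fun u => lexlt u x) S.
have rkS : forall x, x \in S -> rk x < size S.
  move=> x xS; rewrite /rk -(count_predC (fun u => lexlt u x) S) -addn1 leq_add2l.
  rewrite -has_count; apply/hasP; exists x => //=; by rewrite lexlt_irr.
have inj : {in S &, injective rk}.
  move=> x y xS yS E; apply/eqP; apply: contraT => nxy.
  have lt : forall a b, a \in S -> b \in S -> lexlt a b -> rk a < rk b.
    move=> a b aS bS ab; apply: count_lt.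
      move=> u ua; exact: lexlt_trans ua ab.
    by exists a; rewrite aS ab lexlt_irr.
  case/orP: (lexlt_total nxy) => h.
  - by have := lt _ _ xS yS h; rewrite E ltnn.
  - by have := lt _ _ yS xS h; rewrite E ltnn.
have P : perm_eq (map rk S) (iota 0 (size S)).
  apply: perm_range; first by rewrite map_inj_in_uniq.
    by rewrite size_map.
  by move=> z /mapP[x xS ->]; apply: rkS.
have -> : count (fun x => (rk x).+1 == i) S = count (pred1 i.-1) (map rk S).
  rewrite count_map; apply: eq_count => x /=; apply/eqP/eqP; lia.
rewrite (permP P) count_uniq_mem ?iota_uniq // mem_iota; lia.
Qed.



Lemma rot_rot_mod (T : Type) (s : seq T) a b : a < size s -> b < size s ->
  rot a (rot b s) = rot ((a + b) %% size s) s.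
Proof.
move=> ha hb; rewrite rot_add_mod; [|exact: ltnW|exact: ltnW].
case: ifP => h.
  case: (ltngtP (a + b) (size s)) => h'.
  - by rewrite modn_small.
  - by rewrite ltnNge h in h'.
  - by rewrite h' modnn rot_size rot0.
have e : a + b = (a + b - size s) + size s by rewrite subnK // ltnW // ltnNge h.
rewrite {2}e modnDr modn_small //.
rewrite ltn_subLR; last by rewrite ltnW // ltnNge h.
lia.
Qed.

Theorem corollary1 (n : nat) (w : seq nat) :
  inW n w ->
  size (border w) = nblocks w ->
  forall i k : nat, 1 <= i <= nblocks w -> 1 <= k <= nblocks w ->
  ((count (fun v => rank v k == i) (border w))%:R / (size (border w))%:R
     = 1 / (nblocks w)%:R :> rat)%R.
Proof.
move=> HW hsz i k hi hk.
have [Hg Ef] := blocks_inW HW.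
set bs := blocks w in Hg Ef.
have EN : nblocks w = size bs by [].
set N := nblocks w in hsz hi hk EN *.
set g := fun j => flatten (rot j bs).
have Hit : forall j, j <= N -> iter j beta w = g j.
  elim => [|j IH] hj /=; first by rewrite /g rot0 Ef.
  rewrite IH; last by lia.
  rewrite /beta /g (blocks_rot j HW) -/bs -rotD ?size_rot; last by lia.
  by rewrite add1n.
have Hb : border w = undup (map g (iota 0 N)).
  rewrite /border -/N; congr undup; apply/eq_in_map => j; rewrite mem_iota => h.
  apply: Hit; lia.
set S := map g (iota 0 N) in Hb.
have uS : uniq S.
  rewrite (uniq_size_uniq (undup_uniq S) (mem_undup S)) -Hb hsz.
  by rewrite /S size_map size_iota.
rewrite hsz Hb undup_id //.
suff -> : count (fun v => rank v k == i) S = 1 by [].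
have Hblk : forall m, blocks (g m) = rot m bs by move=> m; apply: blocks_rot HW.
have Hbrot : forall m l, m < N -> 1 <= l <= N ->
    brot (g m) l = g ((l.-1 + m) %% N).
  move=> m l hm hl; rewrite /brot Hblk /g EN rot_rot_mod //; lia.
set R := fun c => (count (fun j => lexlt (g j) (g c)) (iota 0 N)).+1.
have Hrank : forall m, m < N -> rank (g m) k = R ((k.-1 + m) %% N).
  move=> m hm; rewrite /rank /nblocks Hblk size_rot -EN.
  rewrite (@eq_in_count _ _ (fun l => lexlt (g ((l.-1 + m) %% N)) (g ((k.-1 + m) %% N)))); last first.
    by move=> l; rewrite mem_iota => hl /=; rewrite !Hbrot //; lia.
  rewrite -(count_map (fun l => (l.-1 + m) %% N) (fun c => lexlt (g c) (g ((k.-1 + m) %% N)))).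
  rewrite /R; congr (_.+1); apply/permP; apply: perm_range.
  - rewrite map_inj_in_uniq ?iota_uniq //.
    move=> x y; rewrite !mem_iota => hx hy /eqP.
    rewrite eqn_modDr (modn_small (_ : x.-1 < N)); last by lia.
    rewrite (modn_small (_ : y.-1 < N)); last by lia.
    move/eqP; lia.
  - by rewrite size_map size_iota.
  - by move=> z /mapP[x _ ->]; rewrite ltn_mod; lia.
rewrite /S count_map.
rewrite (@eq_in_count _ _ (fun m => R ((k.-1 + m) %% N) == i)); last first.
  by move=> m; rewrite mem_iota => hm /=; rewrite Hrank //; lia.
rewrite -(count_map (fun m => (k.-1 + m) %% N) (fun c => R c == i)).
have P : perm_eq (map (fun m => (k.-1 + m) %% N) (iota 0 N)) (iota 0 N).
  apply: perm_range.
  - rewrite map_inj_in_uniq ?iota_uniq //.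
    move=> x y; rewrite !mem_iota => hx hy /eqP.
    rewrite ![(k.-1 + _)]addnC eqn_modDr !modn_small; [by move/eqP| lia | lia].
  - by rewrite size_map size_iota.
  - by move=> z /mapP[x _ ->]; rewrite ltn_mod; lia.
rewrite (permP P).
have -> : count (fun c => R c == i) (iota 0 N) =
          count (fun x => (count (fun u => lexlt u x) S).+1 == i) S.
  rewrite /S count_map; apply: eq_count => c /=; by rewrite /R count_map.
apply: rank_count => //; by rewrite /S size_map size_iota.
Qed.
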